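(* Let $n\ge3$. The following relations hold in $\mathrm{YTL}_{d,n}(u)$: (1) $g_ig_{i+1}g_i+g_ig_{i+1}+g_{i+1}g_i+g_i+g_{i+1}+1=0$ for $1\le i<n-1$; (2) $(t_i-t_{i+2})(1+g_i)+(t_i-t_{i+1})(g_{i+1}+g_{i+1}g_i)=0$ for $1\le i<n-1$; (3) $(t_{i+2}-t_i)(1+g_{i+1})+(t_{i+2}-t_{i+1})(g_i+g_ig_{i+1})=0$ for $1\le i<n-1$; (4) $(t_{i+2}-t_{i+1})(t_{i+2}-t_i)(g_i+1)=0$ for $1\le i<n-1$; (5) $(t_{i-1}-t_{i+1})(t_{i-1}-t_i)(g_i+1)=0$ for $1<i\le n-1$; (6) $(t_i-t_{i+1})(t_{i+1}-t_{i+2})(t_i-t_{i+2})=0$ for $1\le i<n-1$.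
   Context: Let $d,n\ge1$ be integers and $u$ an indeterminate. The Yokonuma–Hecke algebra $\mathrm{Y}_{d,n}(u)$ is the associative $\mathbb{C}[u,u^{-1}]$-algebra generated by $g_1,\dots,g_{n-1},t_1,\dots,t_n$ subject to: $g_ig_j=g_jg_i$ for $|i-j|>1$; $g_ig_{i+1}g_i=g_{i+1}g_ig_{i+1}$ for $1\le i\le n-2$; $t_it_j=t_jt_i$ for all $i,j$; $t_jg_i=g_it_{s_i(j)}$ for all $i,j$, where $s_i$ is the transposition $(i,i+1)$; $t_j^d=1$ for all $j$; and $g_i^2=1+(u-1)e_i+(u-1)e_ig_i$, where $e_i=\frac1d\sum_{s=0}^{d-1}t_i^st_{i+1}^{-s}$. For $n\ge3$, the Yokonuma–Temperley–Lieb algebra $\mathrm{YTL}_{d,n}(u)$ is the quotient of $\mathrm{Y}_{d,n}(u)$ by the two-sided ideal generated by the elements $g_ig_{i+1}g_i+g_ig_{i+1}+g_{i+1}g_i+g_i+g_{i+1}+1$, $1\le i\le n-2$; images of the generators in the quotient are denoted by the same letters. *)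

(* Defs.v *)
From HB Require Import structures.
From mathcomp Require Import all_boot all_order all_algebra.
Set Implicit Arguments. Unset Strict Implicit. Unset Printing Implicit Defensive.
Import Order.TTheory GRing.Theory Num.Theory.
Local Open Scope ring_scope.

Definition swap_idx (i j : nat) : nat :=
  if j == i then i.+1 else if j == i.+1 then i else j.

Definition ytl_e (K : fieldType) (A : unitAlgType K) (d : nat)
    (t : nat -> A) (i : nat) : A :=
  (d%:R : K)^-1 *: \sum_(s < d) (t i ^+ s * t i.+1 ^- s).

Definition is_YH_family (K : fieldType) (A : unitAlgType K) (d n : nat)
    (u : A) (g t : nat -> A) : Prop :=
  (forall i j, (1 <= i <= n.-1)%N -> (1 <= j <= n.-1)%N ->
         ((i.+1 < j) || (j.+1 < i))%N -> g i * g j = g j * g i) /\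
      (forall i, (1 <= i <= n - 2)%N ->
         g i * g i.+1 * g i = g i.+1 * g i * g i.+1) /\
      (forall i j, (1 <= i <= n)%N -> (1 <= j <= n)%N -> t i * t j = t j * t i) /\
      (forall i j, (1 <= i <= n.-1)%N -> (1 <= j <= n)%N ->
         t j * g i = g i * t (swap_idx i j)) /\
      (forall j, (1 <= j <= n)%N -> t j ^+ d = 1) /\
      (forall i, (1 <= i <= n.-1)%N ->
         g i ^+ 2 = 1 + (u - 1) * ytl_e d t i + (u - 1) * ytl_e d t i * g i).

Definition ytl_rel (A : ringType) (g : nat -> A) (i : nat) : A :=
  g i * g i.+1 * g i + g i * g i.+1 + g i.+1 * g i + g i + g i.+1 + 1.

Definition is_YTL_family (K : fieldType) (A : unitAlgType K) (d n : nat)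
    (u : A) (g t : nat -> A) : Prop :=
  is_YH_family d n u g t /\ (forall i, (1 <= i <= n - 2)%N -> ytl_rel g i = 0).

(* Main.v *)
Require Import Defs.
From HB Require Import structures.
From mathcomp Require Import all_boot all_order all_algebra.
From mathcomp Require Import zify.
Import GRing.Theory.
Local Open Scope ring_scope.
Set Implicit Arguments. Unset Strict Implicit.
Definition Gs (A : pzRingType) (d : nat) (x y : A) : A :=
  \sum_(0 <= k < d) x ^+ k * y ^+ (d - k).
Definition Cj (A : pzRingType) (d : nat) (x Y : A) : A :=
  \sum_(0 <= k < d) x ^+ k * Y * x ^+ (d - k).

Lemma intertw (A : pzRingType) (Y x y : A) : Y * x = y * Y ->
  forall m, Y * x ^+ m = y ^+ m * Y.
Proof.
move=> H; elim=> [|m IH]; first by rewrite !expr0 mulr1 mul1r.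
by rewrite !exprS mulrA H -mulrA IH mulrA.
Qed.

Lemma Cj_mul (A : pzRingType) (d : nat) (x y p Y : A) : GRing.comm p x ->
  Y * x = y * Y -> Cj d x (p * Y) = p * Gs d x y * Y.
Proof.
move=> px /intertw HY; rewrite /Cj /Gs mulr_sumr mulr_suml.
apply: eq_bigr => k _.
have pk : GRing.comm p (x ^+ k) by apply: commrX.
by rewrite -!mulrA HY !mulrA pk.
Qed.

Lemma Cj_add (A : pzRingType) (d : nat) (x Y Z : A) : Cj d x (Y + Z) = Cj d x Y + Cj d x Z.
Proof. by rewrite /Cj -big_split /=; apply: eq_bigr => k _; rewrite mulrDr mulrDl. Qed.

Lemma Cj0 (A : pzRingType) (d : nat) (x : A) : Cj d x 0 = 0.
Proof. by rewrite /Cj big1 // => k _; rewrite mulr0 mul0r. Qed.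

Lemma Gxx (A : pzRingType) (d : nat) (x : A) : x ^+ d = 1 -> Gs d x x = d%:R.
Proof.
move=> xd; rewrite /Gs (eq_big_nat _ _ (F2 := fun _ => 1)).
  by rewrite sumr_const_nat subn0.
by move=> k /andP[_ kd]; rewrite -exprD subnKC ?xd // ltnW.
Qed.

Lemma Gkill (A : pzRingType) (d : nat) (x y : A) : GRing.comm x y -> x ^+ d = 1 -> y ^+ d = 1 ->
  (x - y) * Gs d x y = 0.
Proof.
move=> xy xd yd; rewrite /Gs mulr_sumr.
rewrite (telescope_sumr_eq (fun k => x ^+ k * y ^+ (d.+1 - k))) //.
  by rewrite subn0 subSnn expr0 xd mul1r expr1 (exprS y d) yd mulr1 mul1r subrr.
move=> k /andP[_ kd].
have yk := commrX k (commr_sym xy).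
rewrite mulrBl; congr (_ - _); first by rewrite mulrA -exprS subSS.
by rewrite mulrA yk -mulrA -exprS subSn // ltnW.
Qed.
Lemma Hpow (A : pzRingType) (x y : A) : GRing.comm x y -> forall k,
  exists H, x ^+ k - y ^+ k = (x - y) * H /\ GRing.comm H x /\ GRing.comm H y.
Proof.
move=> xy; elim=> [|k [H [E [Hx Hy]]]].
  by exists 0; rewrite !expr0 subrr mulr0; split => //; split; apply/commr_sym; apply: commr0.
exists (x ^+ k + H * y); split; last first.
  split; apply/commr_sym; apply: commrD.
  - exact: (commrX k (commr_refl x)).
  - exact: (commrM (commr_sym Hx) xy).
  - exact: (commrX k (commr_sym xy)).
  - exact: (commrM (commr_sym Hy) (commr_refl y)).
have yk := commrX k (commr_sym xy).
by rewrite mulrDr mulrA -E !mulrBl -exprS -exprSr yk addrA subrK.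
Qed.

Lemma Sexists (A : pzRingType) d (x y : A) : GRing.comm x y -> y ^+ d = 1 ->
  forall m, (m <= d)%N -> exists S,
  \sum_(0 <= k < m) x ^+ k * y ^+ (d - k) - m%:R = (x - y) * S /\
  GRing.comm S x /\ GRing.comm S y.
Proof.
move=> xy yd; elim=> [|m IH] md.
  by exists 0; rewrite big_nil subrr mulr0; split => //; split; apply/commr_sym; apply: commr0.
have [S [E [Sx Sy]]] := IH (ltnW md).
have [H [EH [Hx Hy]]] := Hpow xy m.
exists (S + H * y ^+ (d - m)); split; last first.
  split; apply/commr_sym; apply: commrD.
  - exact: (commr_sym Sx).
  - exact: (commrM (commr_sym Hx) (commrX _ xy)).
  - exact: (commr_sym Sy).
  - exact: (commrM (commr_sym Hy) (commrX _ (commr_refl y))).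
rewrite big_nat_recr //= -addn1 natrD mulrDr -E mulrA -EH mulrBl -exprD subnKC ?yd;
  last exact: ltnW.
by rewrite opprD addrACA.
Qed.

Lemma cancel_sq (A : pzRingType) d (x y Z : A) (hcan : forall w : A, w *+ d = 0 -> w = 0) :
  GRing.comm x y -> x ^+ d = 1 -> y ^+ d = 1 ->
  (x - y) * ((x - y) * Z) = 0 -> (x - y) * Z = 0.
Proof.
move=> xy xd yd H0; apply: hcan.
have [S [E [Sx Sy]]] := Sexists xy yd (leqnn d).
have Sxy : GRing.comm S (x - y) by apply: commrB.
have GE : d%:R = Gs d x y - (x - y) * S by rewrite -E /Gs opprB addrC subrK.
have K : (x - y) * (x - y) * S = S * (x - y) * (x - y).
  by rewrite -mulrA -Sxy mulrA -Sxy.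
rewrite -mulrnAr -mulr_natl GE (mulrBl Z (Gs d x y)) mulrBr mulrA Gkill // mul0r sub0r.
by rewrite !mulrA K -!mulrA H0 mulr0 oppr0.
Qed.

Lemma sub2 (V : zmodType) (a b c d : V) : (a+b) - (c+d) = (a-c)+(b-d).
Proof. by rewrite opprD addrACA. Qed.

Lemma intw_mul (A : pzRingType) (P Q x y z : A) :
  P * x = y * P -> Q * y = z * Q -> Q * P * x = z * (Q * P).
Proof. by move=> HP HQ; rewrite -mulrA HP mulrA HQ mulrA. Qed.

Lemma mulrCA_c (A : pzRingType) (x y z : A) : GRing.comm x y -> x * (y * z) = y * (x * z).
Proof. by move=> xy; rewrite mulrA xy -mulrA. Qed.

Lemma perm4 (V : zmodType) (p q r s : V) : p + q + r + s = s + q + r + p.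
Proof. by rewrite addrC -!addrA (addrC p) !addrA. Qed.

Lemma perm4' (V : zmodType) (p q r s : V) : p + q + r + s = s + r + q + p.
Proof. by rewrite perm4 (addrAC s). Qed.

Lemma Gcomm (A : pzRingType) (d : nat) (x y z : A) :
  GRing.comm z x -> GRing.comm z y -> GRing.comm z (Gs d x y).
Proof.
move=> zx zy; rewrite /Gs; apply: commr_sum => k _.
by apply: commrM; apply: commrX.
Qed.

Lemma local_rels (A : pzRingType) (d : nat) (hcan : forall w : A, w *+ d = 0 -> w = 0)
  (a b c g1 g2 : A)
  (ab : GRing.comm a b) (ac : GRing.comm a c) (bc : GRing.comm b c)
  (ad : a ^+ d = 1) (bd : b ^+ d = 1) (cd : c ^+ d = 1)
  (g1a : g1 * a = b * g1) (g1b : g1 * b = a * g1) (g1c : g1 * c = c * g1)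
  (g2a : g2 * a = a * g2) (g2b : g2 * b = c * g2) (g2c : g2 * c = b * g2)
  (R0 : g1 * g2 * g1 + g1 * g2 + g2 * g1 + g1 + g2 + 1 = 0) :
  [/\ (a - c) * (1 + g1) + (a - b) * (g2 + g2 * g1) = 0,
      (c - a) * (1 + g2) + (c - b) * (g1 + g1 * g2) = 0,
      (c - b) * (c - a) * (g1 + 1) = 0,
      (a - c) * (a - b) * (g2 + 1) = 0 &
      (a - b) * (b - c) * (a - c) = 0].
Proof.
have H2 : (a - b) * (g2 * g1) + (a - c) * g1 + (a - b) * g2 + (a - c) = 0.
  have w1 : g1 * g2 * g1 * c = a * (g1 * g2 * g1).
    exact: (intw_mul g1c (intw_mul g2c g1b)).
  have w2 : g1 * g2 * c = a * (g1 * g2) by exact: (intw_mul g2c g1b).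
  have w3 : g2 * g1 * c = b * (g2 * g1) by exact: (intw_mul g1c g2c).
  have X : a * (g1 * g2 * g1 + g1 * g2 + g2 * g1 + g1 + g2 + 1)
       - (g1 * g2 * g1 + g1 * g2 + g2 * g1 + g1 + g2 + 1) * c = 0.
    by rewrite R0 mulr0 mul0r subrr.
  rewrite !mulrDr !mulrDl w1 w2 w3 g1c g2c mul1r mulr1 !sub2 -!mulrBl !subrr !mul0r !add0r in X.
  exact X.
have H3 : (c - b) * (g1 * g2) + (c - b) * g1 + (c - a) * g2 + (c - a) = 0.
  have w1 : g1 * g2 * g1 * a = c * (g1 * g2 * g1).
    exact: (intw_mul g1a (intw_mul g2b g1c)).
  have w2 : g1 * g2 * a = b * (g1 * g2) by exact: (intw_mul g2a g1a).
  have w3 : g2 * g1 * a = c * (g2 * g1) by exact: (intw_mul g1a g2b).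
  have X : c * (g1 * g2 * g1 + g1 * g2 + g2 * g1 + g1 + g2 + 1)
       - (g1 * g2 * g1 + g1 * g2 + g2 * g1 + g1 + g2 + 1) * a = 0.
    by rewrite R0 mulr0 mul0r subrr.
  rewrite !mulrDr !mulrDl w1 w2 w3 g1a g2a mul1r mulr1 !sub2 -!mulrBl !subrr !mul0r !add0r ?addr0 in X.
  exact X.
have X2n : (a - c) * 1 + (a - c) * g1 + (a - b) * g2 + (a - b) * (g2 * g1) = 0.
  by rewrite perm4 mulr1.
have X3n : (c - a) * 1 + (c - a) * g2 + (c - b) * g1 + (c - b) * (g1 * g2) = 0.
  by rewrite perm4' mulr1.
have one : forall x : A, 1 * x = x * 1 by move=> x; rewrite mul1r mulr1.
have ca_ := fun (x y : A) (xa : GRing.comm x a) (ya : GRing.comm y a) =>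
  commr_sym (commrB (commr_sym xa) (commr_sym ya)).
have ba := commr_sym ab. have ca := commr_sym ac. have cb := commr_sym bc.
have aa := commr_refl a. have bb := commr_refl b. have cc := commr_refl c.
(* Stage A : average X2n by conjugation with a *)
have YA : (a - c) * d%:R * 1 + (a - c) * Gs d a b * g1 + (a - b) * d%:R * g2
          + (a - b) * Gs d a c * (g2 * g1) = 0.
  have := congr1 (Cj d a) X2n.
  rewrite Cj0 !Cj_add (Cj_mul d (ca_ _ _ aa ca) (one a)) (Cj_mul d (ca_ _ _ aa ca) g1a).
  rewrite (Cj_mul d (ca_ _ _ aa ba) g2a) (Cj_mul d (ca_ _ _ aa ba) (intw_mul g1a g2b)).
  by rewrite Gxx.
have cdz : forall x y z : A, GRing.comm x z -> GRing.comm y z -> GRing.comm (x - y) z.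
  by move=> x y z xz yz; apply/commr_sym/commrB; apply/commr_sym.
have E1 : (a - b) * ((a - c) * Gs d a b * g1) = 0.
  have h : GRing.comm (a - b) (a - c) by apply: commrB; apply: cdz.
  by rewrite !mulrA h -(mulrA (a - c)) Gkill // mulr0 mul0r.
have ZA : (a - b) * (a - c) * d%:R * 1 + (a - b) * (a - b) * d%:R * g2
          + (a - b) * (a - b) * Gs d a c * (g2 * g1) = 0.
  have := congr1 (fun w => (a - b) * w) YA.
  move=> H; rewrite /= mulr0 !mulrDr E1 addr0 in H.
  by rewrite !mulrA in H *.
have H6 : (a - b) * (b - c) * (a - c) = 0.
  set p1 := (a - b) * (a - c) * d%:R in ZA.
  set p2 := (a - b) * (a - b) * d%:R in ZA.
  set p3 := (a - b) * (a - b) * Gs d a c in ZA.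
  have c1 : GRing.comm p1 c.
    exact: commr_sym (commrM (commrM (commrB ca cb) (commrB ca cc)) (commr_nat c d)).
  have c2 : GRing.comm p2 c.
    exact: commr_sym (commrM (commrM (commrB ca cb) (commrB ca cb)) (commr_nat c d)).
  have c3 : GRing.comm p3 c.
    exact: commr_sym (commrM (commrM (commrB ca cb) (commrB ca cb)) (Gcomm d ca cc)).
  have := congr1 (Cj d c) ZA.
  rewrite Cj0 !Cj_add (Cj_mul d c1 (one c)) (Cj_mul d c2 g2c) (Cj_mul d c3 (intw_mul g1c g2c)) Gxx //.
  move=> YB.
  have cbc : forall p, GRing.comm p c -> GRing.comm p b -> (c - b) * p = p * (c - b).
    by move=> p pc pb; apply/commr_sym; apply: commrB.
  have c2b : GRing.comm p2 b.
    exact: commr_sym (commrM (commrM (commrB ba bb) (commrB ba bb)) (commr_nat b d)).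
  have c3b : GRing.comm p3 b.
    exact: commr_sym (commrM (commrM (commrB ba bb) (commrB ba bb)) (Gcomm d ba bc)).
  have H := congr1 (fun w => (c - b) * w) YB.
  rewrite /= mulr0 !mulrDr in H.
  rewrite (mulrA (c - b) (p2 * _)) (mulrA (c - b) p2) (cbc p2) // -(mulrA p2) Gkill // in H.
  rewrite (mulrA (c - b) (p3 * _)) (mulrA (c - b) p3) (cbc p3) // -(mulrA p3) Gkill // in H.
  rewrite !mulr0 !mul0r !addr0 mulr1 /p1 !mulr_natr !mulrnAr in H.
  apply hcan; apply hcan.
  have hh : GRing.comm (b - c) (a - b) by apply: commrB; apply: cdz.
  have e : c - b = - (b - c) by rewrite opprB.
  rewrite e mulNr mulrA hh in H.
  by move/eqP: H; rewrite !mulNrn oppr_eq0 => /eqP.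
have H5 : (a - c) * (a - b) * (g2 + 1) = 0.
  have cac_ab : GRing.comm (a - c) (a - b) by apply: commrB; apply: cdz.
  have cac_ac : GRing.comm (a - c) (a - c) by apply: commr_refl.
  have cac_bc : GRing.comm (a - c) (b - c) by apply: commrB; apply: cdz.
  have cq : GRing.comm (a - c) ((a - b) * (a - b)) by apply: commrM.
  have cD : GRing.comm (a - c) ((a - b) * (b - c)) by apply: commrM.
  have H := congr1 (fun w => (a - c) * w) ZA.
  rewrite /= mulr0 (mulrDr (a - c)) (mulrDr (a - c)) in H.
  rewrite (mulrA (a - c) _ (g2 * g1)) (mulrA (a - c) _ (Gs d a c)) in H.
  rewrite cq -(mulrA ((a - b) * (a - b)) (a - c)) Gkill // mulr0 mul0r addr0 in H.
  have key : (a - b) * (a - c) = (a - b) * (a - b) + (a - b) * (b - c).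
    by rewrite -mulrDr addrA subrK.
  rewrite mulr1 key (mulrDl ((a - b) * (a - b))) (mulrDr (a - c)) (mulrA (a - c) ((a - b) * (b - c))) cD H6 mul0r addr0 in H.
  rewrite (mulrA (a - c) _ g2) -[X in X + _ = _]mulr1 -mulrDr in H.
  rewrite mulr_natr mulrnAr mulrnAl in H.
  have H' := hcan _ H.
  have Z0 : (a - b) * ((a - b) * ((a - c) * (g2 + 1))) = 0.
    by rewrite cq (addrC 1 g2) in H'; rewrite !mulrA in H' *.
  have := cancel_sq hcan ab ad bd Z0.
  by rewrite mulrA -cac_ab.
have H4 : (c - b) * (c - a) * (g1 + 1) = 0.
  have YC : (c - a) * d%:R * 1 + (c - a) * Gs d c b * g2 + (c - b) * d%:R * g1
            + (c - b) * Gs d c a * (g1 * g2) = 0.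
    have := congr1 (Cj d c) X3n.
    rewrite Cj0 !Cj_add (Cj_mul d (cdz _ _ _ cc ac) (one c)) (Cj_mul d (cdz _ _ _ cc ac) g2c).
    rewrite (Cj_mul d (cdz _ _ _ cc bc) g1c) (Cj_mul d (cdz _ _ _ cc bc) (intw_mul g2c g1b)).
    by rewrite Gxx.
  have ccb_ca : GRing.comm (c - b) (c - a) by apply: commrB; apply: cdz.
  have E3 : (c - b) * ((c - a) * Gs d c b * g2) = 0.
    by rewrite !mulrA ccb_ca -(mulrA (c - a)) Gkill // mulr0 mul0r.
  have ZC : (c - b) * (c - a) * d%:R * 1 + (c - b) * (c - b) * d%:R * g1
          + (c - b) * (c - b) * Gs d c a * (g1 * g2) = 0.
    have := congr1 (fun w => (c - b) * w) YC.
    move=> H; rewrite /= mulr0 (mulrDr (c - b)) (mulrDr (c - b)) (mulrDr (c - b)) E3 addr0 in H.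
    by rewrite !mulrA in H *.
  have cca_cb : GRing.comm (c - a) (c - b) by apply: commr_sym.
  have cq : GRing.comm (c - a) ((c - b) * (c - b)) by apply: commrM.
  have D' : (c - a) * ((c - b) * (b - a)) = 0.
    have e1 : c - a = - (a - c) by rewrite opprB.
    have e2 : c - b = - (b - c) by rewrite opprB.
    have e3 : b - a = - (a - b) by rewrite opprB.
    have hh : GRing.comm (b - c) (a - b) by apply: commrB; apply: cdz.
    have cD : GRing.comm (a - c) ((a - b) * (b - c)) by apply: commrM; apply: commrB; apply: cdz.
    by rewrite e1 e2 e3 mulrNN mulNr hh cD H6 oppr0.
  have H := congr1 (fun w => (c - a) * w) ZC.
  rewrite /= mulr0 (mulrDr (c - a)) (mulrDr (c - a)) in H.
  rewrite (mulrA (c - a) _ (g1 * g2)) (mulrA (c - a) _ (Gs d c a)) in H.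
  rewrite cq -(mulrA ((c - b) * (c - b)) (c - a)) Gkill // mulr0 mul0r addr0 in H.
  have key : (c - b) * (c - a) = (c - b) * (c - b) + (c - b) * (b - a).
    by rewrite -mulrDr addrA subrK.
  rewrite mulr1 key (mulrDl ((c - b) * (c - b))) (mulrDr (c - a)) (mulrA (c - a) ((c - b) * (b - a))) D' mul0r addr0 in H.
  rewrite (mulrA (c - a) _ g1) -[X in X + _ = _]mulr1 -mulrDr in H.
  rewrite mulr_natr mulrnAr mulrnAl in H.
  have H' := hcan _ H.
  have Z0 : (c - b) * ((c - b) * ((c - a) * (g1 + 1))) = 0.
    by rewrite cq (addrC 1 g1) in H'; rewrite !mulrA in H' *.
  have := cancel_sq hcan cb cd bd Z0.
  by rewrite mulrA.
split => //.
  by rewrite (mulrDr (a - c)) (mulrDr (a - b)) addrA.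
by rewrite (mulrDr (c - a)) (mulrDr (c - b)) addrA.
Qed.


Lemma sw0 i : swap_idx i i = i.+1.
Proof. by rewrite /swap_idx eqxx. Qed.
Lemma sw1 i : swap_idx i i.+1 = i.
Proof. by rewrite /swap_idx; case: eqP => [|_]; [lia | rewrite eqxx]. Qed.
Lemma sw2 i : swap_idx i i.+2 = i.+2.
Proof. by rewrite /swap_idx; case: eqP => [|_]; [lia | case: eqP => [|_]; [lia|]]. Qed.
Lemma sw3 i : swap_idx i.+1 i = i.
Proof. by rewrite /swap_idx; case: eqP => [|_]; [lia | case: eqP => [|_]; [lia|]]. Qed.


Unset Implicit Arguments.

Theorem mainTheorem12 (K : fieldType) (charK0 : [pchar K] =i pred0)
    (A : unitAlgType K) (d n : nat) (hd : (1 <= d)%N) (hn : (3 <= n)%N)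
    (u : A) (u_unit : u \is a GRing.unit) (u_central : forall x : A, u * x = x * u)
    (g t : nat -> A) (hYTL : is_YTL_family d n u g t) :
  (forall i, (1 <= i < n.-1)%N ->
        g i * g i.+1 * g i + g i * g i.+1 + g i.+1 * g i + g i + g i.+1 + 1 = 0) /\
      (forall i, (1 <= i < n.-1)%N ->
        (t i - t i.+2) * (1 + g i) + (t i - t i.+1) * (g i.+1 + g i.+1 * g i) = 0) /\
      (forall i, (1 <= i < n.-1)%N ->
        (t i.+2 - t i) * (1 + g i.+1) + (t i.+2 - t i.+1) * (g i + g i * g i.+1) = 0) /\
      (forall i, (1 <= i < n.-1)%N ->
        (t i.+2 - t i.+1) * (t i.+2 - t i) * (g i + 1) = 0) /\
      (forall i, (1 < i <= n.-1)%N ->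
        (t i.-1 - t i.+1) * (t i.-1 - t i) * (g i + 1) = 0) /\
      (forall i, (1 <= i < n.-1)%N ->
        (t i - t i.+1) * (t i.+1 - t i.+2) * (t i - t i.+2) = 0).
Proof.
have hcan : forall w : A, w *+ d = 0 -> w = 0.
  move=> w H.
  have dK : (d%:R : K) != 0 by rewrite ((pcharf0P K).1 charK0 d) -lt0n.
  by rewrite -[w]scale1r -(mulVf dK) -scalerA scaler_nat H scaler0.
case: hYTL => [[_ [_ [Htt [Htg [Htd _]]]]] Hytl].
have loc : forall i, (1 <= i < n.-1)%N ->
  [/\ (t i - t i.+2) * (1 + g i) + (t i - t i.+1) * (g i.+1 + g i.+1 * g i) = 0,
      (t i.+2 - t i) * (1 + g i.+1) + (t i.+2 - t i.+1) * (g i + g i * g i.+1) = 0,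
      (t i.+2 - t i.+1) * (t i.+2 - t i) * (g i + 1) = 0,
      (t i - t i.+2) * (t i - t i.+1) * (g i.+1 + 1) = 0 &
      (t i - t i.+1) * (t i.+1 - t i.+2) * (t i - t i.+2) = 0].
  move=> i hi.
  have hb1 : (1 <= i <= n)%N by lia.
  have hb2 : (1 <= i.+1 <= n)%N by lia.
  have hb3 : (1 <= i.+2 <= n)%N by lia.
  have hg1 : (1 <= i <= n.-1)%N by lia.
  have hg2 : (1 <= i.+1 <= n.-1)%N by lia.
  have hr : (1 <= i <= n - 2)%N by lia.
  have g1a : g i * t i = t i.+1 * g i by rewrite (Htg i i.+1 hg1 hb2) sw1.
  have g1b : g i * t i.+1 = t i * g i by rewrite (Htg i i hg1 hb1) sw0.
  have g1c : g i * t i.+2 = t i.+2 * g i by rewrite (Htg i i.+2 hg1 hb3) sw2.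
  have g2a : g i.+1 * t i = t i * g i.+1 by rewrite (Htg i.+1 i hg2 hb1) sw3.
  have g2b : g i.+1 * t i.+1 = t i.+2 * g i.+1 by rewrite (Htg i.+1 i.+2 hg2 hb3) sw1.
  have g2c : g i.+1 * t i.+2 = t i.+1 * g i.+1 by rewrite (Htg i.+1 i.+1 hg2 hb2) sw0.
  exact: (local_rels hcan (Htt _ _ hb1 hb2) (Htt _ _ hb1 hb3) (Htt _ _ hb2 hb3)
     (Htd _ hb1) (Htd _ hb2) (Htd _ hb3) g1a g1b g1c g2a g2b g2c (Hytl _ hr)).
split.
  move=> i hi; have hr : (1 <= i <= n - 2)%N by lia.
  exact: (Hytl i hr).
split; first by move=> i /loc [].
split; first by move=> i /loc [].
split; first by move=> i /loc [].
split; last by move=> i /loc [].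
move=> [|j] //= hi.
have hj : (1 <= j < n.-1)%N by lia.
by case: (loc j hj).
Qed.
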